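(* Let $\mathcal{B}=\{1,\dots,|\mathcal{B}|\}$ be a finite set of bins and let $N$ data points $j=1,\dots,N$ each belong to exactly one bin $B(j)\in\mathcal{B}$. For $i\in\mathcal{B}$ let $\mathcal{U}_i=\{j: B(j)=i\}$ and assume $\mathcal{U}_i\neq\emptyset$ for every $i$. Let $P_i\in(0,1]$ for $i\in\mathcal{B}$, and let $O_1,\dots,O_N$ be independent Bernoulli random variables with $\mathbb{P}(O_j=1)=P_{B(j)}$. Set $\mathcal{S}_i=\{j\in\mathcal{U}_i: O_j=1\}$. Let $\mathcal{H}=\{\hat Y_1,\dots,\hat Y_{|\mathcal{H}|}\}$ be a finite set of predictions, and for each $\hat Y\in\mathcal{H}$ and each $j$ let $\delta_j(Y,\hat Y)\in[0,\Delta]$ be a fixed (non-random) loss value, where $\Delta>0$. Let $\tilde P_i>0$, $i\in\mathcal{B}$, be given numbers (estimated propensities). Define the true risk $$R(\hat Y)=\frac{1}{|\mathcal{B}|}\sum_{i=1}^{|\mathcal{B}|}\frac{1}{|\mathcal{U}_i|}\sum_{j\in\mathcal{U}_i}\delta_j(Y,\hat Y)$$ and the VIR estimator $$\hat R_{\mathrm{VIR}}(\hat Y\mid\tilde P)=\frac{1}{|\mathcal{B}|}\sum_{i=1}^{|\mathcal{B}|}\frac{1}{|\mathcal{U}_i|}\sum_{j\in\mathcal{S}_i}\frac{\delta_j(Y,\hat Y)}{\tilde P_i},$$ and let $\hat Y^{\mathrm{ERM}}\in\operatorname{argmin}_{\hat Y\in\mathcal{H}}\hat R_{\mathrm{VIR}}(\hat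 Y\mid\tilde P)$ (a random element of $\mathcal{H}$ depending on $O$). Then for every $\eta\in(0,1)$, with probability at least $1-\eta$ over $O$, $$R(\hat Y^{\mathrm{ERM}})\le \hat R_{\mathrm{VIR}}(\hat Y^{\mathrm{ERM}}\mid\tilde P)+\frac{\Delta}{|\mathcal{B}|}\sum_{i=1}^{|\mathcal{B}|}\Big|1-\frac{P_i}{\tilde P_i}\Big|+\frac{\Delta}{|\mathcal{B}|}\sqrt{\frac{\log(2|\mathcal{H}|/\eta)}{2}}\sqrt{\sum_{i=1}^{|\mathcal{B}|}\frac{1}{\tilde P_i^{2}}}.$$
   Context: This is the generalization bound for imbalanced regression: the label space is partitioned into equal-interval bins, an imbalanced dataset is modeled as the observed subset (indicators $O_j$) of a full dataset, with observation probability (''propensity'') $P_i$ depending only on the bin. $\tilde P_i$ is the smoothed label distribution used in the training objective. *)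

(* Defs.v *)
From HB Require Import structures.
From mathcomp Require Import all_boot all_order all_algebra.
From mathcomp Require Import reals exp.
Set Implicit Arguments. Unset Strict Implicit. Unset Printing Implicit Defensive.
Import Order.TTheory GRing.Theory Num.Theory.
Local Open Scope ring_scope.

Section VIR.
Variables (R : realType) (N nb : nat) (B : 'I_N -> 'I_nb).

Definition Ubin (i : 'I_nb) : {set 'I_N} := [set j | B j == i].

(* true risk R(Yhat), with d j = delta_j(Y, Yhat) *)
Definition trueRisk (d : 'I_N -> R) : R :=
  (nb%:R)^-1 * \sum_(i < nb) (#|Ubin i|%:R)^-1 * \sum_(j in Ubin i) d j.

Definition VIR (Pt : 'I_nb -> R) (O : {ffun 'I_N -> bool}) (d : 'I_N -> R) : R :=
  (nb%:R)^-1 * \sum_(i < nb) (#|Ubin i|%:R)^-1 *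
     \sum_(j in Ubin i | O j) d j / Pt i.

(* joint law of independent Bernoulli variables O_j with P(O_j = 1) = P_{B j} *)
Definition probO (P : 'I_nb -> R) (O : {ffun 'I_N -> bool}) : R :=
  \prod_(j < N) (if O j then P (B j) else 1 - P (B j)).

Definition Prob (P : 'I_nb -> R) (E : pred {ffun 'I_N -> bool}) : R :=
  \sum_(O | E O) probO P O.

End VIR.

(* Main.v *)
Require Import Defs.
From HB Require Import structures.
From mathcomp Require Import all_boot all_order all_algebra.
From mathcomp Require Import reals exp.
From mathcomp Require Import all_classical all_reals all_analysis.
From mathcomp Require Import ring lra.
Import Order.TTheory GRing.Theory Num.Theory.
Import numFieldNormedType.Exports.
Local Open Scope ring_scope.


Section H.
Variables (R : realType) (p q : R).
Hypothesis p0 : 0 < p.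
Hypothesis q0 : 0 <= q.
Lemma isd_eq (f g : R -> R) (x df dg : R) :
  is_derive x (1:R) f df -> f = g -> df = dg -> is_derive x (1:R) g dg.
Proof. by move=> ? <- <-. Qed.
Arguments isd_eq {f g x df dg}.

Definition E (s : R) : R := q * expR s + p.
Lemma E_gt0 s : 0 < E s.
Proof. rewrite /E. apply: ltr_pwDr => //. apply: mulr_ge0 => //; exact: expR_ge0. Qed.

Lemma derE s : is_derive s (1:R) E (q * expR s).
Proof.
have h1 : is_derive s (1:R) (q \*: expR) (q *: expR s) by apply: is_deriveZ.
have h2 := @is_deriveD _ _ _ (q \*: expR) (cst p) s 1 _ _ h1 (is_derive_cst p s 1).
have -> : E = (q \*: expR) + cst p by apply/funext => x.
by rewrite addr0 in h2.
Qed.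

Definition G (s : R) : R := s / 4 - p + p * (E s)^-1.
Lemma derG s : is_derive s (1:R) G (4^-1 - p * q * expR s / (E s)^+2).
Proof.
have hV := is_deriveV (lt0r_neq0 (E_gt0 s)) (derE s).
have h1 : is_derive s (1:R) (p \*: (fun y => (E y)^-1)) _ := is_deriveZ p hV.
have h0 : is_derive s (1:R) (4^-1 \*: id) _ := is_deriveZ (4^-1) (is_derive_id s 1).
have h2 := is_deriveD (is_deriveB h0 (is_derive_cst p s 1)) h1.
refine (isd_eq h2 _ _).
  by apply/funext => x; rewrite /G /= mulrC.
rewrite /= subr0. have sc (a b : R) : a *: b = a * b by []. rewrite !sc mulr1. field. move: (E_gt0 s); rewrite lt0r => /andP[] + _; exact.
Qed.

Definition F (s : R) : R := s ^+ 2 / 8 + s * q - ln (E s).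
Lemma derF s : is_derive s (1:R) F (s / 4 + q - q * expR s / E s).
Proof.
have hl : is_derive (E s) (1:R) (@ln R) (E s)^-1 := is_derive1_ln (E_gt0 s).
have hc := is_derive1_comp hl (derE s).
have hX : is_derive s (1:R) (8^-1 \*: (id ^+ 2)) _ := is_deriveZ (8^-1) (is_deriveX 2 (is_derive_id s 1)).
have hq : is_derive s (1:R) (q \*: id) _ := is_deriveZ q (is_derive_id s 1).
have h2 := is_deriveB (is_deriveD hX hq) hc.
refine (isd_eq h2 _ _).
  by apply/funext => x; rewrite /F /= mulrC [x * q]mulrC.
rewrite /=. have sc (a b : R) : a *: b = a * b by []. rewrite !sc. field. move: (E_gt0 s); rewrite lt0r => /andP[] + _; exact.
Qed.
End H.
Arguments E {R}. Arguments G {R}. Arguments F {R}. Arguments E_gt0 {R p q}. Arguments derG {R p q}. Arguments derF {R p q}.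

Lemma ndecr0 (R : realType) (f df : R -> R) :
  (forall x : R, is_derive x (1:R) f (df x)) -> (forall x, 0 < x -> 0 <= df x) ->
  forall x, 0 <= x -> f 0 <= f x.
Proof.
move=> Hd Hp x x0.
apply: (@ger0_derive1_ndecry R f 0) => //.
  by move=> y; rewrite in_itv /= andbT => y0; rewrite derive1E derive_val; apply: Hp.
apply: continuous_subspaceT => y.
by apply/differentiable_continuous/derivable1_diffP; case: (Hd y).
Qed.

Lemma hoeff_lemma (R : realType) (p s : R) : 0 < p <= 1 -> 0 <= s ->
  p * expR (- (s * (1 - p))) + (1 - p) * expR (s * p) <= expR (s ^+ 2 / 8).
Proof.
move=> /andP[p0 p1] s0.
have q0 : 0 <= 1 - p by rewrite subr_ge0.
have E0 : E p (1 - p) 0 = 1 by rewrite /E expR0 mulr1 subrK.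
have Gge : forall x, 0 <= x -> 0 <= G p (1 - p) x.
  move=> x x0.
  have <- : G p (1 - p) 0 = 0 by rewrite /G E0 invr1 mulr1 mul0r sub0r addNr.
  apply: (@ndecr0 R _ (fun y => 4^-1 - p * (1 - p) * expR y / (E p (1 - p) y)^+2) (derG p0 q0)) => // y y0.
  rewrite subr_ge0 ler_pdivrMr; last by rewrite exprn_gt0 // E_gt0.
  rewrite /E.
  have : 0 <= ((1 - p) * expR y - p) ^+ 2 by apply: sqr_ge0.
  lra.
have Fge : 0 <= F p (1 - p) s.
  have <- : F p (1 - p) 0 = 0 by rewrite /F E0 ln1 expr0n /= mul0r mul0r !addr0 subr0.
  apply: (@ndecr0 R _ (fun y => y / 4 + (1 - p) - (1 - p) * expR y / E p (1 - p) y) (derF p0 q0)) => // y y0.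
  have := Gge y (ltW y0); rewrite /G.
  suff -> : y / 4 + (1 - p) - (1 - p) * expR y / E p (1 - p) y = y / 4 - p + p * (E p (1 - p) y)^-1 by [].
  rewrite /E; field.
  by rewrite -/(E p (1 - p) y); move: (E_gt0 p0 q0 y); rewrite lt0r => /andP[].
move: Fge; rewrite /F subr_ge0 -ler_expR lnK; last by rewrite posrE E_gt0.
move=> H.
have -> : p * expR (- (s * (1 - p))) + (1 - p) * expR (s * p) = expR (- (s * (1 - p))) * E p (1 - p) s.
  have e1 : expR (s * p) = expR (- (s * (1 - p))) * expR s.
    by rewrite -expRD; congr expR; ring.
  by rewrite /E e1; ring.
have -> : s ^+ 2 / 8 = - (s * (1 - p)) + (s ^+ 2 / 8 + s * (1 - p)) by ring.
rewrite expRD; apply: ler_wpM2l => //; exact: expR_ge0.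
Qed.



Section Pr.
Variables (R : realType) (N nb : nat) (B : 'I_N -> 'I_nb) (P : 'I_nb -> R).
Hypothesis HP : forall i, 0 < P i <= 1.

Lemma Pge0 j : 0 <= P (B j). Proof. by case/andP: (HP (B j)) => /ltW. Qed.
Lemma Qge0 j : 0 <= 1 - P (B j). Proof. by case/andP: (HP (B j)) => _; rewrite subr_ge0. Qed.

Lemma probO_ge0 O : 0 <= probO B P O.
Proof. apply: prodr_ge0 => j _; case: (O j); [exact: Pge0|exact: Qge0]. Qed.

Lemma sum_prod (f : 'I_N -> bool -> R) :
  \sum_(O : {ffun 'I_N -> bool}) probO B P O * \prod_(j < N) f j (O j) =
  \prod_(j < N) (P (B j) * f j true + (1 - P (B j)) * f j false).
Proof.
have -> : \prod_(j < N) (P (B j) * f j true + (1 - P (B j)) * f j false) =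
  \prod_(j < N) \sum_(b : bool) (if b then P (B j) else 1 - P (B j)) * f j b.
  by apply: eq_bigr => j _; rewrite big_bool /= addrC.
rewrite bigA_distr_bigA; apply: eq_bigr => O _.
by rewrite /probO -big_split.
Qed.

Lemma Prob_tot : \sum_(O : {ffun 'I_N -> bool}) probO B P O = 1.
Proof.
have := sum_prod (fun _ _ => 1).
under eq_bigr do rewrite big1 // mulr1.
move=> ->; apply: big1 => j _; rewrite !mulr1; ring.
Qed.

Lemma expR_sum (F : 'I_N -> R) : expR (\sum_j F j) = \prod_j expR (F j).
Proof. by apply: (big_rec2 (fun x y => expR x = y)); [rewrite expR0|move=> j x y _ <-; rewrite expRD]. Qed.

Lemma chernoff (a : 'I_N -> R) (lam : R) :
  (forall j, 0 <= a j) -> 0 <= lam ->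
  \sum_(O : {ffun 'I_N -> bool}) probO B P O *
     expR (lam * (\sum_j a j * P (B j) - \sum_j a j * (O j)%:R))
  <= expR (lam ^+ 2 * \sum_j a j ^+ 2 / 8).
Proof.
move=> a0 l0.
have hE : forall O : {ffun 'I_N -> bool},
   expR (lam * (\sum_j a j * P (B j) - \sum_j a j * (O j)%:R)) =
   \prod_j expR (lam * (a j * P (B j) - a j * (O j)%:R)).
  move=> O; rewrite -expR_sum; congr expR.
  by rewrite -sumrB mulr_sumr.
under eq_bigr do rewrite hE.
rewrite (sum_prod (fun j b => expR (lam * (a j * P (B j) - a j * b%:R)))) /=.
have -> : lam ^+ 2 * \sum_j a j ^+ 2 / 8 = \sum_j (lam * a j) ^+ 2 / 8.
  by rewrite mulr_sumr; apply: eq_bigr => j _; rewrite exprMn mulrA.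
rewrite (expR_sum (fun j => (lam * a j) ^+ 2 / 8)); apply: ler_prod => j _; apply/andP; split.
  by apply: addr_ge0; apply: mulr_ge0; rewrite ?Pge0 ?Qge0 ?expR_ge0.
have := @hoeff_lemma R (P (B j)) (lam * a j) (HP (B j)) (mulr_ge0 l0 (a0 j)).
apply: le_trans; apply: lerD; apply: ler_wpM2l; rewrite ?Pge0 ?Qge0 //;
  rewrite ler_expR /=; lra.
Qed.
End Pr.
Arguments probO_ge0 {R N nb B P} HP O.
Arguments chernoff {R N nb B P} HP a lam.

Section Main.
Variables (R : realType) (N nb : nat) (B : 'I_N -> 'I_nb).
Hypothesis Hne : forall i : 'I_nb, exists j : 'I_N, B j = i.

Lemma bin_sum (F : 'I_N -> 'I_nb -> R) :
  \sum_(i < nb) \sum_(j in Ubin B i) F j i = \sum_j F j (B j).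
Proof.
rewrite [RHS](partition_big B xpredT) //=.
apply: eq_bigr => i _; apply: eq_big => j; first by rewrite inE.
by rewrite inE => /eqP ->.
Qed.

Lemma card_pos i : (0 < #|Ubin B i|)%N.
Proof. have [j Hj] := Hne i; rewrite card_gt0; apply/set0Pn; exists j; by rewrite inE Hj. Qed.

Lemma sum_bin_const (g : 'I_nb -> R) :
  \sum_j #|Ubin B (B j)|%:R^-1 * g (B j) = \sum_i g i.
Proof.
rewrite -(bin_sum (fun j i => #|Ubin B i|%:R^-1 * g i)).
apply: eq_bigr => i _; rewrite sumr_const -mulrnAl -mulr_natr mulVf ?mul1r //.
by rewrite pnatr_eq0 -lt0n card_pos.
Qed.

Lemma VIR_sum (Pt : 'I_nb -> R) O (d : 'I_N -> R) : VIR B Pt O d =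
  \sum_j (nb%:R^-1 * #|Ubin B (B j)|%:R^-1 * d j / Pt (B j)) * (O j)%:R.
Proof.
rewrite /VIR mulr_sumr.
rewrite -(bin_sum (fun j i => nb%:R^-1 * #|Ubin B i|%:R^-1 * d j / Pt i * (O j)%:R)).
apply: eq_bigr => i _; rewrite mulrA mulr_sumr big_mkcondr /=.
apply: eq_bigr => j _; case: (O j) => /=; rewrite ?mulr1 ?mulr0 //.
by rewrite !mulrA.
Qed.

Lemma tR_sum (d : 'I_N -> R) : trueRisk B d =
  \sum_j nb%:R^-1 * #|Ubin B (B j)|%:R^-1 * d j.
Proof.
rewrite /trueRisk mulr_sumr.
rewrite -(bin_sum (fun j i => nb%:R^-1 * #|Ubin B i|%:R^-1 * d j)).
apply: eq_bigr => i _; rewrite mulrA mulr_sumr.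
by apply: eq_bigr => j _; rewrite ?mulrA.
Qed.
End Main.
Arguments bin_sum {R N nb B} F.
Arguments card_pos {N nb B} Hne i.
Arguments sum_bin_const {R N nb B} Hne g.
Arguments VIR_sum {R N nb B} Pt O d.
Arguments tR_sum {R N nb B} d.

Section Pr2.
Variables (R : realType) (N nb : nat) (B : 'I_N -> 'I_nb) (P : 'I_nb -> R).
Hypothesis HP : forall i, 0 < P i <= 1.

Lemma Prob_mono (E1 E2 : pred {ffun 'I_N -> bool}) :
  (forall O, E1 O -> E2 O) -> Prob B P E1 <= Prob B P E2.
Proof.
move=> H; rewrite /Prob [X in X <= _]big_mkcond [X in _ <= X]big_mkcond /=.
apply: ler_sum => O _; case: ifP => e1; first by rewrite H.
by case: ifP => // _; exact: probO_ge0 HP _.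
Qed.

Lemma Prob_compl (E : pred {ffun 'I_N -> bool}) :
  Prob B P E = 1 - Prob B P (fun O => ~~ E O).
Proof. by rewrite /Prob -(@Prob_tot R N nb B P) [X in _ = X - _](bigID E) /= addrK. Qed.

Lemma Prob_union h (C : 'I_h -> pred {ffun 'I_N -> bool}) :
  Prob B P (fun O => ~~ [forall k, C k O]) <= \sum_k Prob B P (fun O => ~~ C k O).
Proof.
rewrite /Prob.
apply: (@le_trans _ _ (\sum_O \sum_k (if ~~ C k O then probO B P O else 0))); last first.
  rewrite exchange_big le_eqVlt; apply/orP; left; apply/eqP; apply: eq_bigr => k _. by rewrite [RHS]big_mkcond.
rewrite big_mkcond /=; apply: ler_sum => O _.
have hs : forall k0, 0 <= \sum_(i < h | i != k0) (if ~~ C i O then probO B P O else 0).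
  by move=> k0; apply: sumr_ge0 => i _; case: ifP => _ //; exact: probO_ge0 HP _.
case: ifP => g.
  by case/forallPn: g => k nk; rewrite (bigD1 k) //= nk lerDl.
by apply: sumr_ge0 => i _; case: ifP => _ //; exact: probO_ge0 HP _.
Qed.
End Pr2.
Arguments Prob_mono {R N nb B P} HP E1 E2.
Arguments Prob_compl {R N nb B P} E.
Arguments Prob_union {R N nb B P} HP {h} C.

Theorem mainTheorem1 (R : realType) (N nb h : nat) (B : 'I_N -> 'I_nb)
  (P Pt : 'I_nb -> R) (delta : 'I_h -> 'I_N -> R) (Delta : R)
  (erm : {ffun 'I_N -> bool} -> 'I_h) (eta : R) :
  (forall i : 'I_nb, exists j : 'I_N, B j = i) ->
  (forall i, 0 < P i <= 1) ->
  (forall i, 0 < Pt i) ->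
  0 < Delta ->
  (forall k j, 0 <= delta k j <= Delta) ->
  (0 < h)%N ->
  (forall O k, VIR B Pt O (delta (erm O)) <= VIR B Pt O (delta k)) ->
  0 < eta < 1 ->
  1 - eta <=
  Prob B P (fun O =>
    trueRisk B (delta (erm O)) <=
      VIR B Pt O (delta (erm O))
      + Delta / nb%:R * \sum_(i < nb) `|1 - P i / Pt i|
      + Delta / nb%:R * Num.sqrt (ln (2 * h%:R / eta) / 2)
          * Num.sqrt (\sum_(i < nb) (Pt i ^+ 2)^-1)).
Proof.
move=> Hne HP HPt HD Hd h0 _ /andP[e0 e1].
set b := Delta / nb%:R * \sum_(i < nb) `|1 - P i / Pt i|.
set L := ln (2 * h%:R / eta).
set Sg := \sum_(i < nb) (Pt i ^+ 2)^-1.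
set T := Delta / nb%:R * Num.sqrt (L / 2) * Num.sqrt Sg.
pose cond k O := trueRisk B (delta k) <= VIR B Pt O (delta k) + b + T.
apply: (@le_trans _ _ (Prob B P (fun O => [forall k, cond k O]))); last first.
  by apply: (@Prob_mono R N nb B P HP) => O /forallP; apply.
rewrite (Prob_compl (B:=B) (P:=P) (fun O => [forall k, cond k O])) lerD2l lerN2.
apply: le_trans (Prob_union HP cond) _.
have hR : 0 < h%:R :> R by rewrite ltr0n.
have [nb0|nbp] := posnP nb.
  have nR : nb%:R = 0 :> R by rewrite nb0.
  have hc : forall k O, cond k O.
    move=> k O; rewrite /cond /trueRisk /VIR /b /T nR invr0 !mulr0 !mul0r.
    by rewrite !addr0.
  rewrite big1; first exact: ltW.
  move=> k _; rewrite /Prob big1 // => O; by rewrite hc.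
have key : forall k, Prob B P (fun O => ~~ cond k O) <= eta / (2 * h%:R).
  move=> k.
  have nbR : 0 < nb%:R :> R by rewrite ltr0n.
  pose d := delta k.
  have d0 j : 0 <= d j by case/andP: (Hd k j).
  have dD j : d j <= Delta by case/andP: (Hd k j).
  pose U j := #|Ubin B (B j)|%:R : R.
  have U1 j : 1 <= U j by rewrite /U ler1n card_pos.
  have U0 j : 0 < U j by apply: lt_le_trans (U1 j).
  pose a j := nb%:R^-1 * (U j)^-1 * d j / Pt (B j).
  have a0 j : 0 <= a j.
    rewrite /a; apply: mulr_ge0; last by rewrite invr_ge0 ltW.
    apply: mulr_ge0 => //; apply: mulr_ge0; rewrite invr_ge0 ltW //.
  pose mu := \sum_j a j * P (B j).
  have L0 : 0 < L.
    rewrite /L; apply: ln_gt0; rewrite ltr_pdivlMr // mul1r.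
    have : 1 <= h%:R :> R by rewrite ler1n.
    lra.
  have nbp' := nbp.
  have Sg0 : 0 < Sg.
    rewrite /Sg (bigD1 (Ordinal nbp')) //=.
    have t1 : 0 < (Pt (Ordinal nbp') ^+ 2)^-1 by rewrite invr_gt0 exprn_gt0.
    have t2 : 0 <= \sum_(i < nb | i != Ordinal nbp') (Pt i ^+ 2)^-1.
      by apply: sumr_ge0 => i _; rewrite invr_ge0 exprn_ge0 // ltW.
    lra.
  pose S' := (Delta / nb%:R) ^+ 2 * Sg.
  have S'0 : 0 < S' by rewrite /S' mulr_gt0 // exprn_gt0 // divr_gt0.
  have T0 : 0 <= T.
    rewrite /T; apply: mulr_ge0; last exact: sqrtr_ge0.
    by apply: mulr_ge0; [rewrite ltW // divr_gt0|exact: sqrtr_ge0].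
  have T2 : T ^+ 2 = S' * L / 2.
    rewrite /T /S' !exprMn !sqr_sqrtr ?(ltW Sg0) ?divr_ge0 ?(ltW L0) //; ring.
  have bias : trueRisk B d <= mu + b.
    rewrite (tR_sum d) /mu /b mulr_sumr.
    rewrite -(sum_bin_const Hne (fun i => Delta / nb%:R * `|1 - P i / Pt i|)) -big_split /=.
    apply: ler_sum => j _.
    set c := nb%:R^-1 * (U j)^-1.
    set r := 1 - P (B j) / Pt (B j).
    have c0 : 0 <= c by rewrite /c mulr_ge0 // invr_ge0 ltW.
    have q1 : nb%:R^-1 * #|Ubin B (B j)|%:R^-1 * d j = a j * P (B j) + c * d j * r.
      by rewrite /a /c /r /U; ring.
    have q2 : #|Ubin B (B j)|%:R^-1 * (Delta / nb%:R * `|r|) = c * Delta * `|r|.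
      by rewrite /c /U; ring.
    rewrite q1 q2 lerD2l.
    apply: (@le_trans _ _ (c * d j * `|r|)).
      by apply: ler_wpM2l; [apply: mulr_ge0|apply: ler_norm].
    by apply: ler_wpM2r => //; apply: ler_wpM2l.
  have var : \sum_j a j ^+ 2 <= S'.
    rewrite /S' /Sg mulr_sumr.
    rewrite -(sum_bin_const Hne (fun i => (Delta / nb%:R) ^+ 2 * (Pt i ^+ 2)^-1)).
    apply: ler_sum => j _.
    set u := (U j)^-1.
    have u0 : 0 <= u by rewrite /u invr_ge0 ltW.
    have u1 : u <= 1 by rewrite /u invf_le1; [exact: U1|exact: U0].
    set x := (nb%:R^-1 * d j) ^+ 2 * (Pt (B j))^-1 ^+ 2.
    set y := (Delta / nb%:R) ^+ 2 * (Pt (B j))^-1 ^+ 2.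
    have x0 : 0 <= x by rewrite /x mulr_ge0 // exprn_ge0 // ?mulr_ge0 // invr_ge0 ltW.
    have xy : x <= y.
      rewrite /x /y; apply: ler_wpM2r; first by rewrite exprn_ge0 // invr_ge0 ltW.
      rewrite !expr2 mulrC [Delta / _]mulrC.
      have n0 : 0 <= nb%:R^-1 :> R by rewrite invr_ge0 ltW.
      have cd : nb%:R^-1 * d j <= nb%:R^-1 * Delta by rewrite ler_wpM2l.
      by apply: ler_pM => //; apply: mulr_ge0.
    have -> : a j ^+ 2 = u * (u * x) by rewrite /a /u /x /U; ring.
    rewrite -exprVn -/y; apply: ler_wpM2l => //.
    by apply: le_trans xy; apply: ler_piMl.
  pose lam := 4 * T / S'.
  have lam0 : 0 <= lam by rewrite /lam divr_ge0 // ?mulr_ge0 // ltW.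
  apply: (@le_trans _ _ (\sum_O probO B P O *
      expR (lam * (mu - \sum_j a j * (O j)%:R) - lam * T))).
    rewrite /Prob big_mkcond /=; apply: ler_sum => O _.
    case: ifP => nc; last by rewrite mulr_ge0 ?expR_ge0 // (probO_ge0 HP).
    rewrite -{1}[probO B P O]mulr1 ler_wpM2l ?(probO_ge0 HP) //.
    apply: (le_trans _ (expR_ge1Dx _)); rewrite lerDl -mulrBr mulr_ge0 //.
    move: nc; rewrite /cond (VIR_sum Pt O d) -/d.
    have -> : \sum_j nb%:R^-1 * #|Ubin B (B j)|%:R^-1 * d j / Pt (B j) * (O j)%:R
        = \sum_j a j * (O j)%:R by [].
    rewrite -ltNge => nc.
    have := bias; lra.
  have -> : \sum_O probO B P O * expR (lam * (mu - \sum_j a j * (O j)%:R) - lam * T)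
      = (\sum_O probO B P O * expR (lam * (mu - \sum_j a j * (O j)%:R))) * expR (- (lam * T)).
    by rewrite mulr_suml; apply: eq_bigr => O _; rewrite expRD mulrA.
  apply: le_trans (ler_wpM2r (expR_ge0 _) (chernoff HP a lam a0 lam0)) _.
  rewrite -expRD.
  have hh : lam ^+ 2 * \sum_j (a j ^+ 2 / 8) <= lam ^+ 2 * S' / 8.
    have i8 : 0 <= 8^-1 :> R by rewrite invr_ge0 ler0n.
    rewrite -mulr_suml mulrA.
    exact: (ler_wpM2r i8 (ler_wpM2l (exprn_ge0 2 lam0) var)).
  apply: (@le_trans _ _ (expR (lam ^+ 2 * S' / 8 - lam * T))).
    by rewrite ler_expR lerD2r; exact: hh.
  have -> : lam ^+ 2 * S' / 8 - lam * T = - L.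
    rewrite /lam.
    have -> : (4 * T / S') ^+ 2 * S' / 8 - 4 * T / S' * T = - 2 * T ^+ 2 / S'.
      by field; rewrite lt0r_neq0.
    by rewrite T2; field; rewrite lt0r_neq0.
  rewrite expRN /L lnK ?invf_div //.
  by rewrite posrE divr_gt0 // mulr_gt0.
apply: le_trans (ler_sum _ (fun k _ => key k)) _.
rewrite sumr_const card_ord -[_ *+ h]mulr_natr.
have -> : eta / (2 * h%:R) * h%:R = eta / 2 by field; rewrite lt0r_neq0.
lra.
Qed.
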